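(* Let $(S,\sqcup,\cap)$ be an ado-semilattice and let $I$ be a relatively maximal $\lesssim$-ideal of $S$. Define $E_I=\{(a,b)\in S\times S: a\notin I,\ b\notin I,\ a\curlyvee b\notin I\}$ and $\epsilon_I=E_I\cup(I\times I)$, where $a\curlyvee b=(a\sqcup b)\cap(b\sqcup a)$. Then $\epsilon_I$ is a congruence of the ado-semilattice $(S,\sqcup,\cap)$ and $S/\epsilon_I$ is a flat ado-semilattice. Moreover, $S$ is a subdirect product of the algebras $S/\epsilon_I$ as $I$ ranges over all relatively maximal $\lesssim$-ideals of $S$.
   Context: An o-semilattice is an algebra $(L,\cap,\sqcup)$ such that $(L,\cap)$ is a semilattice and, with $x\leq y$ iff $x=x\cap y$, for all $x,y,z$: (i) $x\leq x\sqcup y$; (ii) $(x\cap y)\sqcup(y\cap z)\leq y$; (iii) $x\sqcup y\leq x\sqcup(y\cap(x\sqcup y))$; (iv) $x\cap z\leq(x\cap y)\sqcup z$. It is distributive if $(a\cap d)\sqcup((b\cap d)\cap(c\cap d))=((a\cap d)\sqcup(b\cap d))\cap((a\cap d)\sqcup(c\cap d))$ for all $a,b,c,d$. An ado-semilattice is a distributive o-semilattice in which $\sqcup$ is associative. Write $x\lesssim y$ iff $y\sqcup x=y$. A $\lesssim$-ideal is a non-empty subset $I$ that is a down-set under $\lesssim$ with $i\sqcup j\in I$ for all $i,j\in I$; it is relatively maximal if for some $d\in S$, $d\notin I$ and no $\lesssim$-ideal properly containing $I$ omits $d$. A flat ado-semilattice is an algebra $(T,\sqcup,\cap)$ with an element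 $0$ such that $a\cap a=a$, $0\cap a=a\cap 0=0$, $a\cap b=0$ for distinct $a,b$, $0\sqcup a=a$, and $a\sqcup b=a$ whenever $a\neq0$. *)

(* Defs.v *)
Set Implicit Arguments.

Section Defs.
Variables (T : Type) (join meet : T -> T -> T).

Definition ole (x y : T) : Prop := x = meet x y.

Definition is_semilattice : Prop :=
  (forall x y z, meet x (meet y z) = meet (meet x y) z) /\
  (forall x y, meet x y = meet y x) /\
  (forall x, meet x x = x).

Definition is_o_semilattice : Prop :=
  is_semilattice /\
  (forall x y, ole x (join x y)) /\
  (forall x y z, ole (join (meet x y) (meet y z)) y) /\
  (forall x y, ole (join x y) (join x (meet y (join x y)))) /\
  (forall x y z, ole (meet x z) (join (meet x y) z)).

Definition is_distributive : Prop :=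
  forall a b c d,
    join (meet a d) (meet (meet b d) (meet c d)) =
    meet (join (meet a d) (meet b d)) (join (meet a d) (meet c d)).

Definition is_ado_semilattice : Prop :=
  is_o_semilattice /\ is_distributive /\
  (forall x y z, join x (join y z) = join (join x y) z).

Definition lesim (x y : T) : Prop := join y x = y.

Definition is_lesim_ideal (I : T -> Prop) : Prop :=
  (exists i, I i) /\
  (forall x y, I y -> lesim x y -> I x) /\
  (forall i j, I i -> I j -> I (join i j)).

Definition properly_contains (J I : T -> Prop) : Prop :=
  (forall x, I x -> J x) /\ (exists x, J x /\ ~ I x).

Definition rel_maximal_ideal (I : T -> Prop) : Prop :=
  is_lesim_ideal I /\
  exists d, ~ I d /\
    forall J, is_lesim_ideal J -> properly_contains J I -> J d.

Definition curlyvee (a b : T) : T := meet (join a b) (join b a).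

Definition E_I (I : T -> Prop) (a b : T) : Prop :=
  ~ I a /\ ~ I b /\ ~ I (curlyvee a b).

Definition eps_I (I : T -> Prop) (a b : T) : Prop :=
  E_I I a b \/ (I a /\ I b).

Definition is_congruence (R : T -> T -> Prop) : Prop :=
  (forall a, R a a) /\
  (forall a b, R a b -> R b a) /\
  (forall a b c, R a b -> R b c -> R a c) /\
  (forall a b c d, R a b -> R c d -> R (join a c) (join b d)) /\
  (forall a b c d, R a b -> R c d -> R (meet a c) (meet b d)).

Definition is_flat (zero : T) : Prop :=
  (forall a, meet a a = a) /\
  (forall a, meet zero a = zero /\ meet a zero = zero) /\
  (forall a b, a <> b -> meet a b = zero) /\
  (forall a, join zero a = a) /\
  (forall a b, a <> zero -> join a b = a).

End Defs.

(* The quotient S/R of (T, join, meet) by a relation R is presented up to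
   isomorphism: a type Q with operations and a surjective homomorphism
   pi : T -> Q whose kernel is exactly R. *)
Definition is_quotient_map (T Q : Type) (joinT meetT : T -> T -> T)
  (joinQ meetQ : Q -> Q -> Q) (R : T -> T -> Prop) (pi : T -> Q) : Prop :=
  (forall q, exists a, pi a = q) /\
  (forall a b, pi (joinT a b) = joinQ (pi a) (pi b)) /\
  (forall a b, pi (meetT a b) = meetQ (pi a) (pi b)) /\
  (forall a b, pi a = pi b <-> R a b).

(* Main.v *)
Require Import Defs.
From Stdlib Require Import Classical ClassicalEpsilon FunctionalExtensionality PropExtensionality ProofIrrelevance.
From mathcomp Require classical_sets.



Definition ax {T} (j m : T -> T -> T) := is_ado_semilattice j m.

Lemma mA {T} {j m : T -> T -> T} (H : ax j m) x y z : m x (m y z) = m (m x y) z.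
Proof. destruct H as [[[h _] _] _]. apply h. Qed.
Lemma mC {T} {j m : T -> T -> T} (H : ax j m) x y : m x y = m y x.
Proof. destruct H as [[[_ [h _]] _] _]. apply h. Qed.
Lemma mI {T} {j m : T -> T -> T} (H : ax j m) x : m x x = x.
Proof. destruct H as [[[_ [_ h]] _] _]. apply h. Qed.
Lemma A1 {T} {j m : T -> T -> T} (H : ax j m) x y : ole m x (j x y).
Proof. destruct H as [[_ [h _]] _]. apply h. Qed.
Lemma A2 {T} {j m : T -> T -> T} (H : ax j m) x y z : ole m (j (m x y) (m y z)) y.
Proof. destruct H as [[_ [_ [h _]]] _]. apply h. Qed.
Lemma A3 {T} {j m : T -> T -> T} (H : ax j m) x y : ole m (j x y) (j x (m y (j x y))).
Proof. destruct H as [[_ [_ [_ [h _]]]] _]. apply h. Qed.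
Lemma A4 {T} {j m : T -> T -> T} (H : ax j m) x y z : ole m (m x z) (j (m x y) z).
Proof. destruct H as [[_ [_ [_ [_ h]]]] _]. apply h. Qed.
Lemma Dst {T} {j m : T -> T -> T} (H : ax j m) a b c d :
    j (m a d) (m (m b d) (m c d)) = m (j (m a d) (m b d)) (j (m a d) (m c d)).
Proof. destruct H as [_ [h _]]. apply h. Qed.
Lemma jA {T} {j m : T -> T -> T} (H : ax j m) x y z : j x (j y z) = j (j x y) z.
Proof. destruct H as [_ [_ h]]. apply h. Qed.

Lemma le_refl {T} {j m : T -> T -> T} (H : ax j m) x : ole m x x.
Proof. unfold ole. now rewrite (mI H). Qed.
Lemma le_trans {T} {j m : T -> T -> T} (H : ax j m) x y z :
  ole m x y -> ole m y z -> ole m x z.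
Proof. unfold ole. intros h1 h2. rewrite h1 at 1. rewrite h2. rewrite (mA H). now rewrite <- h1. Qed.
Lemma le_antisym {T} {j m : T -> T -> T} (H : ax j m) x y :
  ole m x y -> ole m y x -> x = y.
Proof. unfold ole. intros h1 h2. transitivity (m x y). exact h1. rewrite (mC H). symmetry; exact h2. Qed.
Lemma le_eq {T} {j m : T -> T -> T} (H : ax j m) x y : ole m x y -> m x y = x.
Proof. unfold ole. intros h; now rewrite <- h. Qed.
Lemma le_eq' {T} {j m : T -> T -> T} (H : ax j m) x y : ole m x y -> m y x = x.
Proof. intros h; rewrite (mC H); now apply (le_eq H). Qed.
Lemma mle_l {T} {j m : T -> T -> T} (H : ax j m) x y : ole m (m x y) x.
Proof. unfold ole. rewrite (mC H (m x y) x), (mA H), (mI H). reflexivity. Qed.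
Lemma mle_r {T} {j m : T -> T -> T} (H : ax j m) x y : ole m (m x y) y.
Proof. unfold ole. rewrite <- (mA H), (mI H). reflexivity. Qed.
Lemma mglb {T} {j m : T -> T -> T} (H : ax j m) x y z :
  ole m z x -> ole m z y -> ole m z (m x y).
Proof. unfold ole. intros h1 h2. rewrite (mA H), <- h1. exact h2. Qed.

Lemma jidem {T} {j m : T -> T -> T} (H : ax j m) x : j x x = x.
Proof.
  apply (le_antisym H).
  - pose proof (A2 H x x x) as h. rewrite (mI H) in h. exact h.
  - apply (A1 H).
Qed.
Lemma lub {T} {j m : T -> T -> T} (H : ax j m) u v w :
  ole m u w -> ole m v w -> ole m (j u v) w.
Proof.
  intros h1 h2. pose proof (A2 H u w v) as h.
  rewrite (le_eq H _ _ h1), (le_eq' H _ _ h2) in h. exact h.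
Qed.
Lemma ub2 {T} {j m : T -> T -> T} (H : ax j m) u v w :
  ole m u w -> ole m v w -> ole m v (j u v).
Proof.
  intros h1 h2. pose proof (A4 H w u v) as h.
  rewrite (le_eq' H _ _ h1), (le_eq' H _ _ h2) in h. exact h.
Qed.
Lemma jC {T} {j m : T -> T -> T} (H : ax j m) u v w :
  ole m u w -> ole m v w -> j u v = j v u.
Proof.
  intros h1 h2. apply (le_antisym H).
  - apply (lub H). apply (ub2 H v u w); auto. apply (A1 H).
  - apply (lub H). apply (ub2 H u v w); auto. apply (A1 H).
Qed.
Lemma F2a {T} {j m : T -> T -> T} (H : ax j m) u v : ole m u v -> j v u = v.
Proof.
  intros h. apply (le_antisym H). apply (lub H); auto. apply (le_refl H). apply (A1 H).
Qed.
Lemma F2b {T} {j m : T -> T -> T} (H : ax j m) u v : ole m u v -> j u v = v.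
Proof.
  intros h. apply (le_antisym H). apply (lub H); auto. apply (le_refl H).
  apply (ub2 H u v v); auto. apply (le_refl H).
Qed.
Lemma A3' {T} {j m : T -> T -> T} (H : ax j m) x y : j x y = j x (m y (j x y)).
Proof.
  apply (le_antisym H). apply (A3 H). apply (lub H). apply (A1 H). apply (mle_r H).
Qed.

Lemma ls_refl {T} {j m : T -> T -> T} (H : ax j m) x : lesim j x x.
Proof. apply (jidem H). Qed.
Lemma ls_trans {T} {j m : T -> T -> T} (H : ax j m) x y z :
  lesim j x y -> lesim j y z -> lesim j x z.
Proof. unfold lesim. intros h1 h2. rewrite <- h2, <- (jA H), h1. reflexivity. Qed.
Lemma le_ls {T} {j m : T -> T -> T} (H : ax j m) x y : ole m x y -> lesim j x y.
Proof. apply (F2a H). Qed.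
Lemma ls_jl {T} {j m : T -> T -> T} (H : ax j m) x y : lesim j x (j x y).
Proof. apply (le_ls H). apply (A1 H). Qed.
Lemma ls_jr {T} {j m : T -> T -> T} (H : ax j m) x y : lesim j y (j x y).
Proof. unfold lesim. rewrite <- (jA H), (jidem H). reflexivity. Qed.
Lemma ls_lub {T} {j m : T -> T -> T} (H : ax j m) x y c :
  lesim j x c -> lesim j y c -> lesim j (j x y) c.
Proof. unfold lesim. intros h1 h2. rewrite (jA H), h1, h2. reflexivity. Qed.
Lemma ls_mono {T} {j m : T -> T -> T} (H : ax j m) a a' b b' :
  lesim j a a' -> lesim j b b' -> lesim j (j a b) (j a' b').
Proof.
  intros h1 h2. apply (ls_lub H).
  - eapply (ls_trans H); [exact h1|apply (ls_jl H)].
  - eapply (ls_trans H); [exact h2|apply (ls_jr H)].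
Qed.
Lemma compat_ls_le {T} {j m : T -> T -> T} (H : ax j m) s p q :
  ole m s q -> ole m p q -> lesim j s p -> ole m s p.
Proof.
  intros h1 h2 h3. unfold lesim in h3. pose proof (A1 H s p) as h.
  rewrite (jC H s p q h1 h2), h3 in h. exact h.
Qed.
Lemma G1 {T} {j m : T -> T -> T} (H : ax j m) y p z :
  lesim j y p -> m y (j p z) = m y p.
Proof.
  intros h. apply (le_antisym H).
  - apply (mglb H). apply (mle_l H).
    apply (compat_ls_le H _ _ (j p z)). apply (mle_r H). apply (A1 H).
    eapply (ls_trans H). apply (le_ls H). apply (mle_l H). exact h.
  - apply (mglb H). apply (mle_l H). eapply (le_trans H). apply (mle_r H). apply (A1 H).
Qed.
Lemma dist' {T} {j m : T -> T -> T} (H : ax j m) a b c D :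
  ole m a D -> ole m b D -> ole m c D -> j a (m b c) = m (j a b) (j a c).
Proof.
  intros ha hb hc. pose proof (Dst H a b c D) as h.
  rewrite (le_eq H _ _ ha), (le_eq H _ _ hb), (le_eq H _ _ hc) in h. exact h.
Qed.
Lemma mdist {T} {j m : T -> T -> T} (H : ax j m) x y z L :
  ole m x L -> ole m y L -> ole m z L -> m x (j y z) = j (m x y) (m x z).
Proof.
  intros hx hy hz.
  assert (hxy : ole m (m x y) L) by (eapply (le_trans H); [apply (mle_l H)|exact hx]).
  rewrite (dist' H (m x y) x z L hxy hx hz).
  rewrite (F2b H _ _ (mle_l H x y)).
  rewrite (jC H (m x y) z L hxy hz).
  rewrite (dist' H z x y L hz hx hy).
  rewrite (jC H z x L hz hx), (jC H z y L hz hy).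
  rewrite (mA H). rewrite (le_eq H _ _ (A1 H x z)). reflexivity.
Qed.

Lemma half {T} {j m : T -> T -> T} (H : ax j m) A B L0 t :
  ole m A L0 -> ole m B L0 -> lesim j t A -> lesim j t B -> ole m (m A B) t ->
  ole m t A.
Proof.
  intros hA0 hB0 htA htB hm.
  set (L := j A B).
  assert (hA : ole m A L) by apply (A1 H).
  assert (hB : ole m B L) by apply (ub2 H A B L0 hA0 hB0).
  set (R := j t A). set (a := m R A).
  assert (hRA : lesim j R A).
  { unfold lesim, R. rewrite (jA H). unfold lesim in htA. rewrite htA. apply (jidem H). }
  assert (s3 : m R L = a) by (apply (G1 H); exact hRA).
  assert (s4 : j B R = L).
  { unfold R, L. rewrite (jA H). unfold lesim in htB. rewrite htB.
    apply (jC H B A L0); auto. }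
  assert (s5 : L = j B a).
  { rewrite <- s3. rewrite <- s4 at 2. rewrite <- (A3' H). symmetry; exact s4. }
  assert (haA : ole m a A) by apply (mle_r H).
  assert (haL : ole m a L) by (eapply (le_trans H); eauto).
  assert (s6 : A = j (m A B) a).
  { transitivity (m A L). symmetry; apply (le_eq H); exact hA.
    rewrite s5 at 1. rewrite (mdist H A B a L hA hB haL).
    rewrite (le_eq' H _ _ haA). reflexivity. }
  assert (s7 : ole m (m A B) a).
  { apply (mglb H). eapply (le_trans H). exact hm. apply (A1 H). apply (mle_l H). }
  assert (s8 : A = a) by (rewrite s6 at 1; apply (F2b H); exact s7).
  assert (s9 : ole m A R).
  { unfold ole. rewrite (mC H). fold a. exact s8. }
  apply (compat_ls_le H t A R). apply (A1 H). exact s9. exact htA.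
Qed.

Lemma glb {T} {j m : T -> T -> T} (H : ax j m) A B L0 y :
  ole m A L0 -> ole m B L0 -> lesim j y A -> lesim j y B -> lesim j y (m A B).
Proof.
  intros hA0 hB0 hyA hyB.
  set (t := j (m A B) y).
  assert (htA : lesim j t A).
  { unfold t. apply (ls_lub H). apply (le_ls H). apply (mle_l H). exact hyA. }
  assert (htB : lesim j t B).
  { unfold t. apply (ls_lub H). apply (le_ls H). apply (mle_r H). exact hyB. }
  assert (hmt : ole m (m A B) t) by apply (A1 H).
  assert (h1 : ole m t A) by (apply (half H A B L0 t); auto).
  assert (h2 : ole m t B).
  { apply (half H B A L0 t); auto. rewrite (mC H). exact hmt. }
  unfold lesim. fold t. symmetry. apply (le_antisym H). exact hmt. apply (mglb H); auto.
Qed.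

Lemma id_down {T} {j m : T -> T -> T} (H : ax j m) I (hI : is_lesim_ideal j I) x y :
  I y -> lesim j x y -> I x.
Proof. destruct hI as [_ [h _]]. eauto. Qed.
Lemma id_down_le {T} {j m : T -> T -> T} (H : ax j m) I (hI : is_lesim_ideal j I) x y :
  I y -> ole m x y -> I x.
Proof. intros h1 h2. apply (id_down H I hI x y h1). apply (le_ls H). exact h2. Qed.
Lemma id_join {T} {j m : T -> T -> T} (H : ax j m) I (hI : is_lesim_ideal j I) x y :
  I x -> I y -> I (j x y).
Proof. destruct hI as [_ [_ h]]. eauto. Qed.

Lemma gen {T} {j m : T -> T -> T} (H : ax j m) I d (hI : is_lesim_ideal j I)
  (hmax : forall J, is_lesim_ideal j J -> properly_contains J I -> J d) u :
  ~ I u -> exists i, I i /\ lesim j d (j i u).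
Proof.
  intros hu. apply (hmax (fun x => exists i, I i /\ lesim j x (j i u))).
  - destruct hI as [[i0 hi0] [hd hj]]. split; [|split].
    + exists u, i0. split; auto. apply (ls_jr H).
    + intros x y [i [hi hy]] hxy. exists i. split; auto. eapply (ls_trans H); eauto.
    + intros x y [i [hi hx]] [i' [hi' hy]]. exists (j i i'). split; auto.
      apply (ls_lub H).
      * eapply (ls_trans H). exact hx. apply (ls_mono H). apply (ls_jl H). apply (ls_refl H).
      * eapply (ls_trans H). exact hy. apply (ls_mono H). apply (ls_jr H). apply (ls_refl H).
  - split.
    + intros x hx. exists x. split; auto. apply (ls_jl H).
    + exists u. split; auto. destruct hI as [[i0 hi0] _]. exists i0. split; auto. apply (ls_jr H).
Qed.

Lemma primeP {T} {j m : T -> T -> T} (H : ax j m) I d (hI : is_lesim_ideal j I) (hd : ~ I d)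
  (hmax : forall J, is_lesim_ideal j J -> properly_contains J I -> J d) u v w :
  ole m u w -> ole m v w -> ~ I u -> ~ I v -> ~ I (m u v).
Proof.
  intros huw hvw hu hv huv.
  destruct (gen H I d hI hmax u hu) as [i [hi hdi]].
  destruct (gen H I d hI hmax v hv) as [i' [hi' hdi']].
  set (k := j i i').
  assert (hk : I k) by (apply (id_join H I hI); auto).
  assert (hdu : lesim j d (j k u)).
  { eapply (ls_trans H). exact hdi. apply (ls_mono H). apply (ls_jl H). apply (ls_refl H). }
  assert (hdv : lesim j d (j k v)).
  { eapply (ls_trans H). exact hdi'. apply (ls_mono H). apply (ls_jr H). apply (ls_refl H). }
  set (W := j k (j u v)).
  set (u' := m u W). set (v' := m v W).
  assert (eu : j k u = j k u').
  { unfold u', W. rewrite (jA H). rewrite (G1 H u (j k u) v (ls_jr H k u)).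
    apply (A3' H). }
  assert (ev : j k v = j k v').
  { unfold v', W. rewrite (jC H u v w huw hvw). rewrite (jA H).
    rewrite (G1 H v (j k v) u (ls_jr H k v)). apply (A3' H). }
  assert (hkW : ole m k W) by apply (A1 H).
  assert (hu'W : ole m u' W) by apply (mle_r H).
  assert (hv'W : ole m v' W) by apply (mle_r H).
  assert (h1 : ole m (j k u') W) by (apply (lub H); auto).
  assert (h2 : ole m (j k v') W) by (apply (lub H); auto).
  rewrite eu in hdu. rewrite ev in hdv.
  pose proof (glb H _ _ W d h1 h2 hdu hdv) as hg.
  rewrite <- (dist' H k u' v' W hkW hu'W hv'W) in hg.
  apply hd. apply (id_down H I hI d (j k (m u v))).
  - apply (id_join H I hI); auto.
  - eapply (ls_trans H). exact hg. apply (ls_mono H). apply (ls_refl H).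
    apply (le_ls H). apply (mglb H).
    + eapply (le_trans H). apply (mle_l H). apply (mle_l H).
    + eapply (le_trans H). apply (mle_r H). apply (mle_l H).
Qed.

Definition rmx {T} (j : T -> T -> T) I d := is_lesim_ideal j I /\ ~ I d /\
  (forall J, is_lesim_ideal j J -> properly_contains J I -> J d).
Definition epsx {T} (m : T -> T -> T) (I : T -> Prop) a b := (I a /\ I b) \/ ~ I (m a b).

Lemma pP {T} {j m : T -> T -> T} (H : ax j m) I d (R : rmx j I d) u v w :
  ole m u w -> ole m v w -> ~ I u -> ~ I v -> ~ I (m u v).
Proof. destruct R as [a [b c]]. eapply primeP; eauto. Qed.

Lemma nI_l {T} {j m : T -> T -> T} (H : ax j m) I d (R : rmx j I d) a b :
  ~ I (m a b) -> ~ I a.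
Proof. destruct R as [hI _]. intros h ha. apply h. eapply (id_down_le H I hI); eauto. apply (mle_l H). Qed.
Lemma nI_r {T} {j m : T -> T -> T} (H : ax j m) I d (R : rmx j I d) a b :
  ~ I (m a b) -> ~ I b.
Proof. destruct R as [hI _]. intros h ha. apply h. eapply (id_down_le H I hI); eauto. apply (mle_r H). Qed.

Lemma eps_iff {T} {j m : T -> T -> T} (H : ax j m) I d (R : rmx j I d) a b :
  eps_I j m I a b <-> epsx m I a b.
Proof.
  pose proof R as [hI _].
  unfold eps_I, E_I, epsx, curlyvee. split.
  - intros [[ha [hb hw]] | h]; [right | left; exact h].
    intros hab. apply hw.
    set (w := m (j a b) (j b a)) in *.
    assert (h1 : ~ I (m w a)).
    { apply (pP H I d R w a (j a b)); auto. apply (mle_l H). apply (A1 H). }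
    assert (h2 : ~ I (m w b)).
    { apply (pP H I d R w b (j b a)); auto. apply (mle_r H). apply (A1 H). }
    assert (h3 : ~ I (m (m w a) (m w b))).
    { apply (pP H I d R _ _ w); auto; apply (mle_l H). }
    exfalso. apply h3. eapply (id_down_le H I hI). exact hab.
    apply (mglb H).
    + eapply (le_trans H). apply (mle_l H). apply (mle_r H).
    + eapply (le_trans H). apply (mle_r H). apply (mle_r H).
  - intros [h | h]; [right; exact h | left].
    split; [eapply nI_l; eauto | split; [eapply nI_r; eauto|]].
    intros hw. apply h. eapply (id_down_le H I hI). exact hw.
    apply (mglb H).
    + eapply (le_trans H). apply (mle_l H). apply (A1 H).
    + eapply (le_trans H). apply (mle_r H). apply (A1 H).
Qed.

Lemma ex_refl {T} {j m : T -> T -> T} (H : ax j m) I a : epsx m I a a.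
Proof. unfold epsx. destruct (classic (I a)); [left; auto | right; rewrite (mI H); auto]. Qed.
Lemma ex_sym {T} {j m : T -> T -> T} (H : ax j m) I a b : epsx m I a b -> epsx m I b a.
Proof. unfold epsx. rewrite (mC H). tauto. Qed.
Lemma ex_trans {T} {j m : T -> T -> T} (H : ax j m) I d (R : rmx j I d) a b c :
  epsx m I a b -> epsx m I b c -> epsx m I a c.
Proof.
  unfold epsx. intros [[ha hb] | h1] [[hb' hc] | h2].
  - left; auto.
  - exfalso. apply (nI_l H I d R b c h2 hb).
  - exfalso. apply (nI_r H I d R a b h1 hb').
  - right. intros hac. apply (pP H I d R (m a b) (m b c) b (mle_r H a b) (mle_l H b c) h1 h2).
    pose proof R as [hI _]. eapply (id_down_le H I hI). exact hac.
    apply (mglb H).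
    + eapply (le_trans H). apply (mle_l H). apply (mle_l H).
    + eapply (le_trans H). apply (mle_r H). apply (mle_r H).
Qed.

Lemma L1 {T} {j m : T -> T -> T} (H : ax j m) I a c : ~ I a -> epsx m I (j a c) a.
Proof. intros h. right. rewrite (mC H). rewrite (le_eq H _ _ (A1 H a c)). exact h. Qed.
Lemma L2 {T} {j m : T -> T -> T} (H : ax j m) I d (R : rmx j I d) a c :
  I a -> epsx m I (j a c) c.
Proof.
  pose proof R as [hI _]. intros ha. destruct (classic (I c)) as [hc | hc].
  - left. split; auto. apply (id_join H I hI); auto.
  - right. intros h. apply hc. eapply (id_down H I hI). 2: apply (ls_jr H a c).
    rewrite (A3' H). apply (id_join H I hI); auto. rewrite (mC H). exact h.
Qed.

Lemma ex_join {T} {j m : T -> T -> T} (H : ax j m) I d (R : rmx j I d) a b c e :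
  epsx m I a b -> epsx m I c e -> epsx m I (j a c) (j b e).
Proof.
  intros hab hce.
  pose proof (ex_trans H I d R) as tr.
  destruct hab as [[ha hb] | h].
  - eapply tr. apply (L2 H I d R a c ha). eapply tr. exact hce.
    apply (ex_sym H). apply (L2 H I d R b e hb).
  - eapply tr. apply (L1 H I a c (nI_l H I d R a b h)). eapply tr. right; exact h.
    apply (ex_sym H). apply (L1 H I b e (nI_r H I d R a b h)).
Qed.

Lemma ex_meet {T} {j m : T -> T -> T} (H : ax j m) I d (R : rmx j I d) a b c e :
  epsx m I a b -> epsx m I c e -> epsx m I (m a c) (m b e).
Proof.
  pose proof R as [hI _].
  pose proof (ex_trans H I d R) as tr.
  intros hab hce.
  destruct hab as [[ha hb] | h1].
  { left. split; [apply (id_down_le H I hI _ a ha (mle_l H _ _)) | apply (id_down_le H I hI _ b hb (mle_l H _ _))]. }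
  destruct hce as [[hc he] | h2].
  { left. split; [apply (id_down_le H I hI _ c hc (mle_r H _ _)) | apply (id_down_le H I hI _ e he (mle_r H _ _))]. }
  destruct (classic (I (m a c))) as [hac | hac].
  - left. split; auto. destruct (classic (I (m b e))) as [hbe | hbe]; auto.
    exfalso.
    assert (x : epsx m I a c).
    { eapply tr. right; exact h1. eapply tr. right; exact hbe. apply (ex_sym H). right; exact h2. }
    destruct x as [[x _] | x]. apply (nI_l H I d R a b h1 x). auto.
  - assert (x : epsx m I b e).
    { eapply tr. apply (ex_sym H). right; exact h1. eapply tr. right; exact hac. right; exact h2. }
    destruct x as [[x _] | x]. exfalso; apply (nI_l H I d R b a); auto. rewrite (mC H); auto.
    apply (tr _ a). right. rewrite (mC H), (mA H), (mI H). exact hac.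
    apply (tr _ b). right; exact h1.
    right. rewrite (mA H), (mI H). exact x.
Qed.

Lemma quot {T} (R : T -> T -> Prop) (j m : T -> T -> T) (i0 : T)
  (Rr : forall a, R a a) (Rs : forall a b, R a b -> R b a)
  (Rt : forall a b c, R a b -> R b c -> R a c)
  (Rj : forall a b c d, R a b -> R c d -> R (j a c) (j b d))
  (Rm : forall a b c d, R a b -> R c d -> R (m a c) (m b d)) :
  exists (Q : Type) (joinQ meetQ : Q -> Q -> Q) (pi : T -> Q),
    is_quotient_map j m joinQ meetQ R pi.
Proof.
  set (rep := fun a => epsilon (inhabits i0) (R a)).
  assert (rs : forall a, R a (rep a)).
  { intros a. unfold rep. apply epsilon_spec. exists a. apply Rr. }
  assert (re : forall a b, R a b -> rep a = rep b).
  { intros a b h. unfold rep. f_equal. apply functional_extensionality. intros x.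
    apply propositional_extensionality. split; intros h'; eauto. }
  assert (rr : forall a, rep (rep a) = rep a) by (intros a; apply re; apply Rs, rs).
  set (Q := {x : T | rep x = x}).
  set (pi := fun a => exist (fun x => rep x = x) (rep a) (rr a) : Q).
  assert (seq : forall x y (hx : rep x = x) (hy : rep y = y), x = y ->
            exist (fun x => rep x = x) x hx = exist (fun x => rep x = x) y hy).
  { intros x y hx hy e. subst y. f_equal. apply proof_irrelevance. }
  assert (pe : forall a b, R a b -> pi a = pi b).
  { intros a b h. unfold pi. apply seq. apply re. exact h. }
  exists Q, (fun q1 q2 => pi (j (proj1_sig q1) (proj1_sig q2))),
    (fun q1 q2 => pi (m (proj1_sig q1) (proj1_sig q2))), pi.
  split; [|split; [|split]].
  - intros [x hx]. exists x. unfold pi. apply seq. exact hx.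
  - intros a b. simpl. apply pe. apply Rj; apply rs.
  - intros a b. simpl. apply pe. apply Rm; apply rs.
  - intros a b. split.
    + intros h. unfold pi in h. injection h. intros e.
      apply (Rt _ (rep a)). apply rs. rewrite e. apply Rs, rs.
    + apply pe.
Qed.

Lemma ext {T} (j : T -> T -> T) (J : T -> Prop) x :
  is_lesim_ideal j J -> ~ J x ->
  exists I, rel_maximal_ideal j I /\ (forall y, J y -> I y) /\ ~ I x.
Proof.
  intros hJ hx.
  set (G := fun A : T -> Prop => is_lesim_ideal j A /\ (forall y, J y -> A y) /\ ~ A x).
  set (P := fun A : T -> Prop => (forall y, ~ A y) \/ G A).
  assert (PG : forall A y, P A -> A y -> G A).
  { intros A y [h|h] hy; [exfalso; eapply h; eauto | exact h]. }
  destruct (@classical_sets.Zorn_bigcup T P) as [A [PA Amax]].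
  - intros F FP Ftot.
    unfold P at 1. destruct (classic (exists X, F X /\ exists y, X y)) as [[X0 [FX0 [y0 hy0]]] | hne].
    + right. unfold classical_sets.bigcup. simpl.
      assert (GF : forall X y, F X -> X y -> G X) by (intros; eapply PG; eauto).
      split; [|split].
      * split; [|split].
        -- exists y0. exists X0; auto.
        -- intros a b [X FX hb] hab. exists X; auto.
           destruct (GF X b FX hb) as [[_ [hd _]] _]. eauto.
        -- intros a b [X1 F1 ha] [X2 F2 hb].
           destruct (Ftot X1 X2 F1 F2) as [s | s].
           ++ exists X2; auto. destruct (GF X2 b F2 hb) as [[_ [_ hjn]] _]. apply hjn; auto.
           ++ exists X1; auto. destruct (GF X1 a F1 ha) as [[_ [_ hjn]] _]. apply hjn; auto.
      * intros y hy. exists X0; auto. destruct (GF X0 y0 FX0 hy0) as [_ [h _]]. auto.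
      * intros [X FX hX]. destruct (GF X x FX hX) as [_ [_ h]]. auto.
    + left. intros y [X FX hX]. apply hne. exists X. split; eauto.
  - assert (GA : G A).
    { destruct PA as [h | h]; auto. exfalso.
      apply (Amax J). split. intros t ht. exfalso; eapply h; eauto.
      intros s. destruct hJ as [[i hi] _]. apply (h i). apply s. exact hi.
      right. split; auto. }
    destruct GA as [hA [hJA hxA]].
    exists A. split; [|split]; auto.
    split; auto. exists x. split; auto.
    intros J' hJ' [sub [y [hy hny]]]. apply NNPP. intros hx'.
    apply (Amax J'). split. exact sub. intros s. apply hny. apply s. exact hy.
    right. split; [|split]; auto.
Qed.

Lemma rm_rmx {T} (j : T -> T -> T) I : rel_maximal_ideal j I -> exists d, rmx j I d.
Proof. intros [h [d [h1 h2]]]. exists d. split; auto. Qed.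

Lemma down_ideal {T} {j m : T -> T -> T} (H : ax j m) b :
  is_lesim_ideal j (fun x => lesim j x b).
Proof.
  split; [|split].
  - exists b. apply (ls_refl H).
  - intros x y h1 h2. eapply (ls_trans H); eauto.
  - intros x y h1 h2. apply (ls_lub H); auto.
Qed.

Theorem lemma4p9 (T : Type) (join meet : T -> T -> T) :
  is_ado_semilattice join meet ->
  (forall I : T -> Prop, rel_maximal_ideal join I ->
     is_congruence join meet (eps_I join meet I) /\
     exists (Q : Type) (joinQ meetQ : Q -> Q -> Q) (zeroQ : Q) (pi : T -> Q),
       is_quotient_map join meet joinQ meetQ (eps_I join meet I) pi /\
       is_flat joinQ meetQ zeroQ) /\
  (forall a b : T,
     (forall I : T -> Prop, rel_maximal_ideal join I -> eps_I join meet I a b) ->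
     a = b).
Proof.
  intros H. change (ax join meet) in H. split.
  - intros I hrm. destruct (rm_rmx join I hrm) as [d R].
    pose proof R as [hI _].
    pose proof (eps_iff H I d R) as E.
    assert (Rr : forall a, eps_I join meet I a a) by (intros; apply E; apply (ex_refl H)).
    assert (Rs : forall a b, eps_I join meet I a b -> eps_I join meet I b a)
      by (intros a b h; apply E; apply E in h; apply (ex_sym H); exact h).
    assert (Rt : forall a b c, eps_I join meet I a b -> eps_I join meet I b c -> eps_I join meet I a c)
      by (intros a b c h1 h2; apply E; apply E in h1; apply E in h2; eapply (ex_trans H I d R); eauto).
    assert (Rj : forall a b c e, eps_I join meet I a b -> eps_I join meet I c e ->
                 eps_I join meet I (join a c) (join b e))
      by (intros a b c e h1 h2; apply E; apply E in h1; apply E in h2; apply (ex_join H I d R); auto).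
    assert (Rm : forall a b c e, eps_I join meet I a b -> eps_I join meet I c e ->
                 eps_I join meet I (meet a c) (meet b e))
      by (intros a b c e h1 h2; apply E; apply E in h1; apply E in h2; apply (ex_meet H I d R); auto).
    split. { split; [|split; [|split; [|split]]]; auto. }
    pose proof hI as [[i0 hi0] _].
    destruct (quot (eps_I join meet I) join meet i0 Rr Rs Rt Rj Rm) as [Q [jQ [mQ [pi hq]]]].
    exists Q, jQ, mQ, (pi i0), pi. split; auto.
    destruct hq as [surj [hj [hm heq]]].
    assert (zI : forall a, I a -> pi a = pi i0).
    { intros a ha. apply heq. apply E. left; auto. }
    split; [|split; [|split; [|split]]].
    + intros q. destruct (surj q) as [a <-]. rewrite <- hm. rewrite (mI H). reflexivity.
    + intros q. destruct (surj q) as [a <-]. rewrite <- hm, <- hm. split; apply zI;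
        (eapply (id_down_le H I hI); [exact hi0 | apply (mle_l H)]) ||
        (eapply (id_down_le H I hI); [exact hi0 | apply (mle_r H)]).
    + intros q1 q2 hne. destruct (surj q1) as [a <-]. destruct (surj q2) as [b <-].
      rewrite <- hm. destruct (classic (I (meet a b))) as [h | h]. apply zI; auto.
      exfalso. apply hne. apply heq. apply E. right; exact h.
    + intros q. destruct (surj q) as [a <-]. rewrite <- hj. apply heq. apply E.
      apply (L2 H I d R). exact hi0.
    + intros q1 q2 hne. destruct (surj q1) as [a <-]. destruct (surj q2) as [b <-].
      rewrite <- hj. apply heq. apply E. apply (L1 H). intros ha. apply hne. apply zI; auto.
  - intros a b hall. apply NNPP. intros hne.
    destruct (classic (lesim join a b)) as [hab | hab].
    + destruct (classic (lesim join b a)) as [hba | hba].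
      * assert (hna : ~ lesim join a (meet a b)).
        { intros h. unfold lesim in h. rewrite (F2b H _ _ (mle_l H a b)) in h.
          apply hne. assert (hle : ole meet a b) by (unfold ole; exact h).
          unfold lesim in hba. rewrite (F2b H _ _ hle) in hba. symmetry; exact hba. }
        destruct (ext join (fun x => lesim join x (meet a b)) a (down_ideal H (meet a b)) hna) as [I [hrm [hsub hnI]]].
        pose proof (hall I hrm) as he.
        destruct (rm_rmx join I hrm) as [d [hI _]].
        assert (hnb : ~ I b) by (intros hb; apply hnI; eapply (id_down H I hI); eauto).
        destruct he as [[_ [_ hv]] | [ha _]]; [|auto].
        apply hv. unfold curlyvee. unfold lesim in hab, hba. rewrite hab, hba.
        apply hsub. apply (ls_refl H).
      * destruct (ext join (fun x => lesim join x a) b (down_ideal H a) hba) as [I [hrm [hsub hnI]]].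
        pose proof (hall I hrm) as he.
        assert (ha : I a) by (apply hsub; apply (ls_refl H)).
        destruct he as [[h _] | [_ h]]; auto.
    + destruct (ext join (fun x => lesim join x b) a (down_ideal H b) hab) as [I [hrm [hsub hnI]]].
      pose proof (hall I hrm) as he.
      assert (hb : I b) by (apply hsub; apply (ls_refl H)).
      destruct he as [[_ [h _]] | [h _]]; auto.
Qed.
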